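(* For every $C>0$ there exist a two-element state space $\Omega=\{a,b\}$, reversible ergodic Markov chains $\mathcal{M}$ and $\mathcal{M}'$ on $\Omega$ with the same stationary distribution $\pi$, and an $(\mathcal{M},\mathcal{M}')$-flow $f$ with $A(f)\le 3$, such that $$\tau_a\Big(\mathcal{M},\frac14\Big)\ >\ C\cdot A(f)\left[\tau\Big(\mathcal{M}',\frac{1}{2e}\Big)+1\right]\ln\frac{1}{\frac14\,\pi(a)}.$$ Concretely one may take $\mathcal{M}$ with $P(a,b)=P(b,a)=1-\delta$, $P(a,a)=P(b,b)=\delta$ for sufficiently small $\delta\in(0,\frac12]$, and $\mathcal{M}'$ the chain with $P'(x,y)=\frac12$ for all $x,y\in\Omega$. (Thus, unlike in the case of odd flows, no bound of this form in terms of the congestion of an arbitrary flow is possible.)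
   Context: A (discrete-time) Markov chain on a finite state space $\Omega$ with transition matrix $P$ is ergodic if irreducible and aperiodic; it then has a unique stationary distribution $\pi>0$. It is reversible if $\pi(x)P(x,y)=\pi(y)P(y,x)$. Variation distance: $\|\theta_1-\theta_2\|=\frac12\sum_i|\theta_1(i)-\theta_2(i)|$. Mixing time: $\tau_x(\mathcal{M},\varepsilon)=\min\{t>0 \text{ integer}: \|P^{t'}(x,\cdot)-\pi\|\le\varepsilon \ \forall t'\ge t\}$, $\tau(\mathcal{M},\varepsilon)=\max_x\tau_x(\mathcal{M},\varepsilon)$. Flows: Let $\mathcal{M}$ have transition matrix $P$ and stationary distribution $\pi$, and $\mathcal{M}'$ have transition matrix $P'$ and stationary distribution $\pi'$. Let $E^*(\mathcal{M})=\{(x,y): P(x,y)>0\}$ (pairs not necessarily distinct), similarly $E^*(\mathcal{M}')$. For $(x,y)\in E^*(\mathcal{M}')$, $\mathcal{P}_{x,y}$ is the set of paths $\gamma=(x=x_0,\dots,x_k=y)$ with each $(x_i,x_{i+1})\in E^*(\mathcal{M})$ and each $(z,w)\in E^*(\mathcal{M})$ appearing at most twice as a consecutive pair on $\gamma$; $|\gamma|=k$. $\mathcal{P}=\bigcup_{(x,y)\in E^*(\mathcal{M}')}\mathcal{P}_{x,y}$. An $(\mathcal{M},\mathcal{M}')$-flow is $f:\mathcal{P}\to[0,1]$ with $\sum_{\gamma\in\mathcal{P}_{x,y}}f(\gamma)=\pi'(x)P'(x,y)$ for all $(x,y)\in E^*(\mathcal{M}')$. With $r((z,w),\gamma)$ the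 number of times $(z,w)$ appears on $\gamma$, $A_{z,w}(f)=\frac{1}{\pi(z)P(z,w)}\sum_{\gamma:(z,w)\in\gamma}r((z,w),\gamma)|\gamma|f(\gamma)$ and $A(f)=\max_{(z,w)\in E^*(\mathcal{M})}A_{z,w}(f)$. *)

(* Defs.v *)
From HB Require Import structures.
From mathcomp Require Import all_boot all_order all_algebra.
From mathcomp Require Import reals sequences exp.
Set Implicit Arguments. Unset Strict Implicit. Unset Printing Implicit Defensive.
Import Order.TTheory GRing.Theory Num.Theory.
Local Open Scope ring_scope.

Section MarkovDefs.
Variables (R : realType) (Omega : finType).

Definition stochastic (P : Omega -> Omega -> R) : Prop :=
  (forall x y, 0 <= P x y) /\ (forall x, \sum_(y : Omega) P x y = 1).

Fixpoint Pow (P : Omega -> Omega -> R) (t : nat) : Omega -> Omega -> R :=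
  match t with
  | 0 => fun x y => (x == y)%:R
  | t'.+1 => fun x y => \sum_(z : Omega) Pow P t' x z * P z y
  end.

Definition irreducible (P : Omega -> Omega -> R) : Prop :=
  forall x y, exists t : nat, 0 < Pow P t x y.

(* gcd { t >= 1 : P^t(x,x) > 0 } = 1 for every state x *)
Definition aperiodic (P : Omega -> Omega -> R) : Prop :=
  forall x (d : nat), (forall t : nat, (0 < t)%N -> 0 < Pow P t x x -> (d %| t)%N) -> d = 1%N.

Definition ergodic (P : Omega -> Omega -> R) : Prop :=
  stochastic P /\ irreducible P /\ aperiodic P.

Definition stationary (P : Omega -> Omega -> R) (pi : Omega -> R) : Prop :=
  (forall x, 0 <= pi x) /\ \sum_(x : Omega) pi x = 1 /\
  (forall y, \sum_(x : Omega) pi x * P x y = pi y).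

Definition reversible (P : Omega -> Omega -> R) (pi : Omega -> R) : Prop :=
  forall x y, pi x * P x y = pi y * P y x.

Definition tvd (mu nu : Omega -> R) : R :=
  2^-1 * \sum_(i : Omega) `|mu i - nu i|.

Definition good_from (P : Omega -> Omega -> R) (pi : Omega -> R) (x : Omega)
  (eps : R) (t : nat) : Prop :=
  (0 < t)%N /\ forall t' : nat, (t <= t')%N -> tvd (Pow P t' x) pi <= eps.

Definition is_mixing_time_from (P : Omega -> Omega -> R) (pi : Omega -> R)
  (x : Omega) (eps : R) (t : nat) : Prop :=
  good_from P pi x eps t /\ (forall s : nat, good_from P pi x eps s -> (t <= s)%N).

Definition is_mixing_time (P : Omega -> Omega -> R) (pi : Omega -> R)
  (eps : R) (t : nat) : Prop :=
  (forall x, exists tx, is_mixing_time_from P pi x eps tx /\ (tx <= t)%N) /\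
  (exists x, is_mixing_time_from P pi x eps t).

(* A path gamma = (x_0, ..., x_k) is represented by its vertex sequence
   [:: x_0; ...; x_k] (k >= 0); its consecutive pairs are: *)
Definition edges_of (s : seq Omega) : seq (Omega * Omega) := zip s (behead s).

Definition plen (s : seq Omega) : nat := size (behead s).

Definition rcount (e : Omega * Omega) (s : seq Omega) : nat :=
  count (pred1 e) (edges_of s).

Definition is_path (P : Omega -> Omega -> R) (x y : Omega) (s : seq Omega) : bool :=
  match s with
  | [::] => false
  | x0 :: tl =>
      [&& x0 == x, last x0 tl == y,
          all (fun e => 0 < P e.1 e.2) (edges_of s) &
          all (fun e => (rcount e s <= 2)%N) (edges_of s)]
  end.

Definition in_calP (P P' : Omega -> Omega -> R) (s : seq Omega) : bool :=
  match s with
  | [::] => false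
  | x0 :: tl => (0 < P' x0 (last x0 tl)) && is_path P x0 (last x0 tl) s
  end.

(* Every path in calP has at most 2 #|Omega|^2 edges, hence fewer than
   maxlen vertices; so summing over all vertex sequences of length < maxlen
   is summing over all of calP (the set is finite). *)
Definition maxlen : nat := (2 * #|Omega| ^ 2).+2.

Definition sum_seqs (Q : pred (seq Omega)) (F : seq Omega -> R) : R :=
  \sum_(n < maxlen) \sum_(t : n.-tuple Omega | Q (tval t)) F (tval t).

(* f is an (M, M')-flow, where pi' is the stationary distribution of M'.
   f is given as a function on all sequences; only its values on calP matter. *)
Definition is_flow (P P' : Omega -> Omega -> R) (pi' : Omega -> R)
  (f : seq Omega -> R) : Prop :=
  (forall s, in_calP P P' s -> 0 <= f s <= 1) /\
  (forall x y, 0 < P' x y ->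
     sum_seqs (is_path P x y) f = pi' x * P' x y).

Definition congestion_edge (P P' : Omega -> Omega -> R) (pi : Omega -> R)
  (f : seq Omega -> R) (z w : Omega) : R :=
  (pi z * P z w)^-1 *
  sum_seqs (fun s => in_calP P P' s && (0 < rcount (z, w) s)%N)
    (fun s => (rcount (z, w) s)%:R * (plen s)%:R * f s).

(* A(f) = max over (z,w) in E*(M) of A_{z,w}(f) (all of which are >= 0 for a flow). *)
Definition congestion (P P' : Omega -> Omega -> R) (pi : Omega -> R)
  (f : seq Omega -> R) : R :=
  \big[Num.max/0]_(z : Omega) \big[Num.max/0]_(w : Omega | 0 < P z w)
     congestion_edge P P' pi f z w.

End MarkovDefs.

(* Main.v *)
Require Import Defs.
From HB Require Import structures.
From mathcomp Require Import all_boot all_order all_algebra.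
From mathcomp Require Import reals sequences exp boolp.
From mathcomp Require Import ring lra.
Import Order.TTheory GRing.Theory Num.Theory.
Local Open Scope ring_scope.

Lemma sum_seqs_ind (R : realType) (Omega : finType) (Q : pred (seq Omega))
  (G : seq Omega -> R) (s0 : seq Omega) :
  (size s0 < maxlen Omega)%N ->
  sum_seqs Q (fun s => (s == s0)%:R * G s) = (Q s0)%:R * G s0.
Proof.
move=> H; rewrite /sum_seqs (bigD1 (Ordinal H)) //= [X in _ + X]big1.
  rewrite addr0 big_mkcond (bigD1 (in_tuple s0)) //= eqxx.
  rewrite big1 ?addr0; first by case: (Q s0); rewrite ?mul1r ?mul0r.
  move=> t ht; case: (Q t) => //; rewrite (_ : (tval t == s0) = false) ?mul0r //.
  apply/negbTE; apply: contra ht => /eqP e; apply/eqP/val_inj; exact: e.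
move=> i hi; apply: big1 => t _.
rewrite (_ : (tval t == s0) = false) ?mul0r //; apply/negbTE.
apply: contra hi => /eqP e; apply/eqP/val_inj; rewrite /= -e size_tuple.
by [].
Qed.

Lemma sum_seqs_ext (R : realType) (Omega : finType) (Q : pred (seq Omega))
  (F1 F2 : seq Omega -> R) : (forall s, F1 s = F2 s) ->
  sum_seqs Q F1 = sum_seqs Q F2.
Proof. by move=> h; apply: eq_bigr => i _; apply: eq_bigr => t _; rewrite h. Qed.

Lemma sum_seqsD (R : realType) (Omega : finType) (Q : pred (seq Omega))
  (F1 F2 : seq Omega -> R) :
  sum_seqs Q (fun s => F1 s + F2 s) = sum_seqs Q F1 + sum_seqs Q F2.
Proof. by rewrite /sum_seqs -big_split; apply: eq_bigr => i _; rewrite big_split. Qed.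

Lemma sum_seqs0 (R : realType) (Omega : finType) (Q : pred (seq Omega)) :
  sum_seqs Q (fun _ => 0 : R) = 0.
Proof. by rewrite /sum_seqs big1 // => i _; rewrite big1. Qed.

Lemma sum_seqs_list (R : realType) (Omega : finType) (Q : pred (seq Omega))
  (G : seq Omega -> R) (L : seq (seq Omega)) :
  all (fun s0 => size s0 < maxlen Omega)%N L ->
  sum_seqs Q (fun s => \sum_(s0 <- L) (s == s0)%:R * G s) =
  \sum_(s0 <- L) (Q s0)%:R * G s0.
Proof.
elim: L => [|s0 L IH] /=.
  move=> _; rewrite big_nil -[RHS](@sum_seqs0 R _ Q); apply: sum_seqs_ext => s; by rewrite big_nil.
case/andP=> h1 h2; rewrite big_cons -IH // -sum_seqs_ind // -sum_seqsD.
by apply: sum_seqs_ext => s; rewrite big_cons.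
Qed.

Lemma Pow_sum (R : realType) (Omega : finType) (P : Omega -> Omega -> R) t x :
  stochastic P -> \sum_y Pow P t x y = 1.
Proof.
move=> [_ hs]; elim: t => [|t IH] /=.
  by rewrite (bigD1 x) //= eqxx big1 ?addr0 // => y /negbTE; rewrite eq_sym => ->.
rewrite exchange_big /= -[RHS]IH; apply: eq_bigr => z _.
by rewrite -mulr_sumr hs mulr1.
Qed.

Lemma Pow1 (R : realType) (Omega : finType) (P : Omega -> Omega -> R) x y :
  Pow P 1 x y = P x y.
Proof.
rewrite /= (bigD1 x) //= eqxx mul1r big1 ?addr0 // => z /negbTE.
by rewrite eq_sym => ->; rewrite mul0r.
Qed.

Lemma ergodic_pos (R : realType) (Omega : finType) (P : Omega -> Omega -> R) :
  (forall x y, 0 < P x y) -> (forall x, \sum_y P x y = 1) -> ergodic P.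
Proof.
move=> hp hs; split; first by split=> // x y; exact: ltW.
split; first by move=> x y; exists 1%N; rewrite Pow1.
move=> x d H; apply/eqP; rewrite -dvdn1; apply: H => //; by rewrite Pow1.
Qed.

Lemma bern1 (R : realType) (x : R) n : 0 <= x -> 1 + n%:R * x <= (1 + x) ^+ n.
Proof.
move=> hx; elim: n => [|n IH]; first by rewrite expr0 mul0r addr0.
rewrite exprS -natr1.
have h1 := mulr_ge0 (ler0n R n) (mulr_ge0 hx hx).
have h2 : 0 <= 1 + x by lra.
nra.
Qed.

Lemma bern2 (R : realType) (x : R) n : 0 <= x -> x <= 1 -> 1 - n%:R * x <= (1 - x) ^+ n.
Proof.
move=> hx hx1; elim: n => [|n IH]; first by rewrite expr0 mul0r subr0.
rewrite exprS -natr1.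
have h1 := mulr_ge0 (ler0n R n) (mulr_ge0 hx hx).
have h2 : 0 <= 1 - x by lra.
nra.
Qed.

Set Implicit Arguments. Unset Strict Implicit.
Definition PP (R : realType) (d : R) (x y : bool) : R := if x == y then d else 1 - d.
Definition PQ (R : realType) (x y : bool) : R := 2^-1.
Definition pih (R : realType) (x : bool) : R := 2^-1.
Definition Lf : seq (seq bool) := [:: [:: true]; [:: false]; [:: true; false]; [:: false; true]].
Definition ff (R : realType) (s : seq bool) : R := \sum_(s0 <- Lf) (s == s0)%:R * 4^-1.

Lemma maxlen_bool : maxlen bool = 10%N.
Proof. by rewrite /maxlen card_bool. Qed.

Lemma Lf_size : all (fun s0 => size s0 < maxlen bool)%N Lf.
Proof. by rewrite maxlen_bool. Qed.

Lemma PowPP (R : realType) (d : R) t x y :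
  Pow (PP d) t x y = 2^-1 * (1 + (if x == y then 1 else -1) * (2 * d - 1) ^+ t).
Proof.
elim: t x y => [|t IH] x y /=.
  by case: x; case: y => /=; rewrite expr0; lra.
rewrite big_bool !IH /PP exprS.
by case: x; case: y => /=; ring.
Qed.

Lemma PowPQ (R : realType) t x y : Pow (PQ R) t.+1 x y = 2^-1.
Proof.
rewrite /= -mulr_suml Pow_sum ?mul1r //.
split=> [x0 y0|x0]; first by rewrite /PQ; lra.
rewrite big_bool /PQ /=; lra.
Qed.

Lemma tvdPP (R : realType) (d : R) t :
  tvd (Pow (PP d) t true) (pih R) = 2^-1 * `|2 * d - 1| ^+ t.
Proof.
rewrite /tvd big_bool !PowPP /pih /=.
have -> : 2^-1 * (1 + 1 * (2 * d - 1) ^+ t) - 2^-1 = 2^-1 * (2 * d - 1) ^+ t :> R by ring.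
have -> : 2^-1 * (1 + -1 * (2 * d - 1) ^+ t) - 2^-1 = - (2^-1 * (2 * d - 1) ^+ t) :> R by ring.
rewrite normrN normrM normrX ger0_norm; last by lra.
lra.
Qed.

Lemma flowPP (R : realType) (d : R) : 0 < d -> d <= 2^-1 ->
  is_flow (PP d) (PQ R) (pih R) (ff R).
Proof.
move=> d0 d1; split.
  move=> s _; rewrite /ff !big_cons big_nil.
  by do 4 case: (_ == _); rewrite /=; lra.
move=> x y _.
rewrite (@sum_seqs_list R bool _ (fun _ => 4^-1) Lf Lf_size).
have hd : (0 < 1 - d) = true by apply/idP; lra.
rewrite !big_cons big_nil /pih /PQ.
by case: x; case: y; rewrite /= /PP /= ?hd ?d0 /=; lra.
Qed.

Lemma congPP (R : realType) (d : R) : 0 < d -> d <= 2^-1 ->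
  congestion (PP d) (PQ R) (pih R) (ff R) <= 1.
Proof.
move=> d0 d1.
have hd : (0 < 1 - d) = true by apply/idP; lra.
apply: bigmax_le => [|z _]; first by lra.
apply: bigmax_le => [|w _]; first by lra.
rewrite /congestion_edge.
rewrite (@sum_seqs_ext R bool _ _
   (fun s => \sum_(s0 <- Lf) (s == s0)%:R * (4^-1 * (rcount (z, w) s)%:R * (plen s)%:R))).
  rewrite (@sum_seqs_list R bool _ (fun s => 4^-1 * (rcount (z, w) s)%:R * (plen s)%:R) Lf Lf_size).
  rewrite !big_cons big_nil /pih /PQ.
  have h2 : (0 < 2^-1 :> R) = true by apply/idP; lra.
  have hu : 0 < 2^-1 * (1 - d) by lra.
  have hi : (2^-1 * (1 - d))^-1 * (2^-1 * (1 - d)) = 1 by rewrite mulVf // gt_eqF.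
  have hv : 0 <= (2^-1 * (1 - d))^-1 by rewrite invr_ge0 ltW.
  case: z; case: w; rewrite /= /PP /rcount /edges_of /plen /= ?hd ?d0 ?h2 /=;
    rewrite ?mul0r ?mulr0 ?addr0 ?add0r ?mul1r ?mulr1; try lra; nra.
move=> s; rewrite /ff mulr_sumr; apply: eq_bigr => s0 _; ring.
Qed.

Unset Implicit Arguments. Set Strict Implicit.
Theorem mainTheorem5 (R : realType) (C : R) :
  0 < C ->
  exists (Omega : finType) (a : Omega) (P P' : Omega -> Omega -> R)
         (pi : Omega -> R) (f : seq Omega -> R),
    #|Omega| = 2%N /\
    ergodic P /\ ergodic P' /\
    stationary P pi /\ stationary P' pi /\
    reversible P pi /\ reversible P' pi /\
    is_flow P P' pi f /\
    congestion P P' pi f <= 3 /\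
    exists (ta T' : nat),
      is_mixing_time_from P pi a (4^-1) ta /\
      is_mixing_time P' pi ((2 * expR 1)^-1) T' /\
      C * congestion P P' pi f * (T'%:R + 1) * ln ((4^-1 * pi a)^-1) < ta%:R.
Proof.
move=> C0.
have [M [hM M0]] : exists M : nat, 16 * C < M%:R /\ (0 < M)%N.
  exists (Num.Def.archi_bound (16 * C)).+1; split => //.
  apply: lt_le_trans (archi_boundP _) _; first by lra.
  by rewrite ler_nat.
have hM1 : 1 <= M%:R :> R by rewrite ler1n.
pose x : R := (4 * M%:R)^-1.
have hxM : x * (4 * M%:R) = 1 by rewrite mulVf // gt_eqF //; lra.
have hx0 : 0 < x by rewrite invr_gt0; lra.
have hx1 : x <= 4^-1 by nra.
pose d : R := x / 2.
have d0 : 0 < d by rewrite /d; lra.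
have d1 : d <= 2^-1 by rewrite /d; lra.
have hq : `|2 * d - 1| = 1 - x.
  rewrite ler0_norm; last by rewrite /d; lra.
  by rewrite /d; lra.
exists bool, true, (PP d), (PQ R), (pih R), (ff R).
have hd : 0 < 1 - d by lra.
have ergP : ergodic (PP d).
  apply: ergodic_pos => [[] []|[]]; rewrite /PP ?big_bool /=; lra.
have ergQ : ergodic (PQ R).
  apply: ergodic_pos => [[] []|[]]; rewrite /PQ ?big_bool /=; lra.
split; first by rewrite card_bool.
split; first exact: ergP.
split; first exact: ergQ.
split.
  split; first by move=> y; rewrite /pih; lra.
  split; first by rewrite big_bool /pih /=; lra.
  by move=> [] ; rewrite big_bool /pih /PP /=; lra.
split.
  split; first by move=> y; rewrite /pih; lra.
  split; first by rewrite big_bool /pih /=; lra.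
  by move=> [] ; rewrite big_bool /pih /PQ /=; lra.
split; first by move=> [] []; rewrite /pih /PP /=.
split; first by move=> [] []; rewrite /pih /PQ /=.
split; first exact: flowPP.
have hA := congPP d0 d1.
split; first by lra.
have htvd t : tvd (Pow (PP d) t true) (pih R) = 2^-1 * (1 - x) ^+ t by rewrite tvdPP hq.
have hy0 : 0 <= 1 - x by lra.
have hy1 : 1 - x <= 1 by lra.
pose n0 := (4 * M)%N.
have hn0 : (1 - x) ^+ n0 <= 2^-1.
  have hb := @bern1 R x n0 (ltW hx0).
  have hnx : n0%:R * x = 1 by rewrite /n0 natrM mulrC.
  have hprod : (1 - x) ^+ n0 * (1 + x) ^+ n0 <= 1.
    rewrite -exprMn; apply: exprn_ile1; nra.
  have hp0 : 0 <= (1 - x) ^+ n0 by apply: exprn_ge0.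
  nra.
have exG : exists n, `[< good_from (PP d) (pih R) true 4^-1 n >].
  exists n0; apply/asboolP; split; first by rewrite /n0 muln_gt0.
  move=> t' ht'; rewrite htvd.
  have := ler_wiXn2l hy0 hy1 ht'; lra.
case: (ex_minnP exG) => ta /asboolP hta hmin.
have hlow t : (t <= M)%N -> 4^-1 < tvd (Pow (PP d) t true) (pih R).
  move=> ht; rewrite htvd.
  have h1 := ler_wiXn2l hy0 hy1 ht.
  have hx1' : x <= 1 by lra.
  have h2 := @bern2 R x M (ltW hx0) hx1'.
  have hMx : M%:R * x = 4^-1 by nra.
  lra.
have hta_gt : (M < ta)%N.
  rewrite ltnNge; apply/negP => hle.
  have := hlow _ hle; have := hta.2 ta (leqnn _); lra.
exists ta, 1%N.
split; first by split=> // s hs; apply: hmin; exact/asboolP.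
have heps : 0 <= (2 * expR 1)^-1 :> R.
  by rewrite invr_ge0 mulr_ge0 // ltW // expR_gt0.
have hQ y : is_mixing_time_from (PQ R) (pih R) y ((2 * expR 1)^-1) 1.
  split.
    split=> // [[|t']] // _; rewrite /tvd big1 ?mulr0; last by move=> i _; rewrite PowPQ /pih subrr normr0.
    exact: heps.
  by move=> s [].
split; first by split; [move=> y; exists 1%N; split | exists true].
rewrite /pih -invfM !invrK.
set A := congestion _ _ _ _.
have hL0 : 0 <= ln (4 * 2 : R) by apply: ln_ge0; lra.
have hL8 : ln (4 * 2 : R) < 4 * 2 by apply: ln_sublinear; lra.
have hMt : M%:R < ta%:R :> R by rewrite ltr_nat.
have h1 : 0 <= (C * ln (4 * 2 : R)) * (1 - A) by apply: mulr_ge0; [apply: mulr_ge0; lra | rewrite /A; lra].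
have h2 : 0 <= C * (4 * 2 - ln (4 * 2 : R)) by apply: mulr_ge0; lra.
nra.
Qed.
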